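(* For any $p,q>0$ with $\tfrac1p+\tfrac1q=1$, the function \[ f(s)=\frac{s\log(ps)+(1-s)\log(q(1-s))}{(s-\tfrac1p)^2},\qquad s\in(0,1), \] is convex. *)

(* Defs.v *)
From Stdlib Require Import Reals Lra.
Open Scope R_scope.

Definition convex_on_open (a b : R) (f : R -> R) : Prop :=
  forall x y t, a < x < b -> a < y < b -> 0 <= t <= 1 ->
    f (t * x + (1 - t) * y) <= t * f x + (1 - t) * f y.

(* The function of the paper,
     f(s) = (s log(p s) + (1-s) log(q (1-s))) / (s - 1/p)^2 ,
   with its removable singularity at s = 1/p filled in by the limit value
   p q / 2 (numerator and its derivative vanish at 1/p when 1/p+1/q=1,
   second derivative 1/(s(1-s)) = pq there). *)
Definition fpq (p q : R) (s : R) : R :=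
  if Req_EM_T s (/ p) then p * q / 2
  else (s * ln (p * s) + (1 - s) * ln (q * (1 - s))) / (s - / p) ^ 2.

(* Main.v *)
Require Import Defs.
From Stdlib Require Import Reals Lra.
From Coquelicot Require Import Coquelicot.
Open Scope R_scope.

Definition kk (x : R) : R := / x + / (1 - x).
Definition itg (a s t : R) : R := (1 - t) * kk (a + t * (s - a)).
Definition NN (a x : R) : R := x * (ln x - ln a) + (1 - x) * (ln (1 - x) - ln (1 - a)).
Definition NN' (a x : R) : R := (ln x - ln a) - (ln (1 - x) - ln (1 - a)).

Lemma xt_in a s t : 0 < a < 1 -> 0 < s < 1 -> 0 <= t <= 1 -> 0 < a + t * (s - a) < 1.
Proof. intros [Ha1 Ha2] [Hs1 Hs2] [Ht1 Ht2].
  replace (a + t * (s - a)) with ((1 - t) * a + t * s) by ring.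
  assert (0 <= (1-t)*a) by (apply Rmult_le_pos; lra).
  assert (0 <= t*s) by (apply Rmult_le_pos; lra).
  assert (0 <= (1-t)*(1-a)) by (apply Rmult_le_pos; lra).
  assert (0 <= t*(1-s)) by (apply Rmult_le_pos; lra).
  destruct (Req_dec t 0); [subst; lra|].
  assert (0 < t*s) by (apply Rmult_lt_0_compat; lra).
  assert (0 < t*(1-s)) by (apply Rmult_lt_0_compat; lra).
  split; nra. Qed.

Lemma itg_derive a s t : 0 < a < 1 -> 0 < s < 1 -> 0 <= t <= 1 -> s <> a ->
  is_derive (fun t => ((1 - t) * (s - a) * NN' a (a + t * (s - a)) + NN a (a + t * (s - a))) / (s - a) ^ 2)
    t (itg a s t).
Proof.
  intros Ha Hs Ht Hsa. destruct (xt_in a s t Ha Hs Ht) as [H1 H2].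
  unfold NN, NN', itg, kk.
  auto_derive.
  - repeat split; lra.
  - assert (s - a <> 0) by lra. field. repeat split; lra.
Qed.

Lemma itg_cont a s t : 0 < a < 1 -> 0 < s < 1 -> 0 <= t <= 1 -> continuous (itg a s) t.
Proof.
  intros Ha Hs Ht. destruct (xt_in a s t Ha Hs Ht).
  apply (@ex_derive_continuous R_AbsRing R_NormedModule). unfold itg, kk. auto_derive. repeat split; lra.
Qed.

Lemma repr a s : 0 < a < 1 -> 0 < s < 1 ->
  is_RInt (itg a s) 0 1 (if Req_EM_T s a then kk a / 2 else NN a s / (s - a) ^ 2).
Proof.
  intros Ha Hs. destruct (Req_EM_T s a) as [E|E].
  - subst s.
    assert (H := is_RInt_derive (fun t => (t - t^2/2) * kk a) (itg a a) 0 1).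
    replace (kk a / 2) with (minus ((1 - 1^2/2) * kk a) ((0 - 0^2/2) * kk a)).
    + apply H.
      * intros t Ht. rewrite Rmin_left in Ht by lra. rewrite Rmax_right in Ht by lra.
        unfold itg. auto_derive; [easy|]. replace (a + t * (a - a)) with a by ring. field.
      * intros t Ht. rewrite Rmin_left in Ht by lra. rewrite Rmax_right in Ht by lra.
        apply itg_cont; lra.
    + unfold minus, plus, opp; simpl. field.
  - assert (H := is_RInt_derive (fun t => ((1 - t) * (s - a) * NN' a (a + t * (s - a)) + NN a (a + t * (s - a))) / (s - a) ^ 2) (itg a s) 0 1).
    match type of H with _ -> _ -> is_RInt _ _ _ ?v => replace (NN a s / (s - a) ^ 2) with v end.
    + apply H.
      * intros t Ht. rewrite Rmin_left in Ht by lra. rewrite Rmax_right in Ht by lra.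
        apply itg_derive; lra.
      * intros t Ht. rewrite Rmin_left in Ht by lra. rewrite Rmax_right in Ht by lra.
        apply itg_cont; lra.
    + unfold minus, plus, opp; simpl.
      replace (a + 1 * (s - a)) with s by ring. replace (a + 0 * (s - a)) with a by ring.
      unfold NN, NN'. rewrite !Rminus_diag. assert (s - a <> 0) by lra. field. auto.
Qed.

Lemma inv_conv u v l : 0 < u -> 0 < v -> 0 <= l <= 1 ->
  / (l * u + (1 - l) * v) <= l * / u + (1 - l) * / v.
Proof.
  intros Hu Hv Hl.
  assert (Hw : 0 < l * u + (1 - l) * v).
  { destruct (Req_dec l 0). subst; lra.
    assert (0 < l * u) by (apply Rmult_lt_0_compat; lra).
    assert (0 <= (1-l) * v) by (apply Rmult_le_pos; lra). lra. }
  assert (E : l * / u + (1 - l) * / v - / (l * u + (1 - l) * v)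
     = l * (1 - l) * (u - v) ^ 2 * / (u * v * (l * u + (1 - l) * v))).
  { field. repeat split; lra. }
  assert (0 <= l * (1 - l) * (u - v) ^ 2 * / (u * v * (l * u + (1 - l) * v))).
  { apply Rmult_le_pos. apply Rmult_le_pos. apply Rmult_le_pos; lra. apply pow2_ge_0.
    left. apply Rinv_0_lt_compat. apply Rmult_lt_0_compat; [apply Rmult_lt_0_compat|]; lra. }
  lra.
Qed.

Lemma kk_conv u v l : 0 < u < 1 -> 0 < v < 1 -> 0 <= l <= 1 ->
  kk (l * u + (1 - l) * v) <= l * kk u + (1 - l) * kk v.
Proof.
  intros Hu Hv Hl. unfold kk.
  assert (H1 := inv_conv u v l ltac:(lra) ltac:(lra) Hl).
  assert (H2 := inv_conv (1 - u) (1 - v) l ltac:(lra) ltac:(lra) Hl).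
  replace (1 - (l * u + (1 - l) * v)) with (l * (1 - u) + (1 - l) * (1 - v)) by ring.
  lra.
Qed.

Lemma fpq_eq p q s (hp : 0 < p) (hq : 0 < q) (hpq : / p + / q = 1) : 0 < s < 1 ->
  fpq p q s = (if Req_EM_T s (/ p) then kk (/ p) / 2 else NN (/ p) s / (s - / p) ^ 2).
Proof.
  intros Hs. unfold fpq. destruct (Req_EM_T s (/ p)) as [E|E].
  - unfold kk. replace (1 - / p) with (/ q) by lra. rewrite !Rinv_inv.
    assert (p * q = p + q).
    { assert (H: p*q*(/p+/q) = p*q) by (rewrite hpq; ring).
      replace (p*q*(/p+/q)) with (q+p) in H by (field; lra). lra. }
    lra.
  - unfold NN. replace (1 - / p) with (/ q) by lra.
    rewrite !ln_mult by lra. rewrite !ln_Rinv by lra. f_equal. ring.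
Qed.

Lemma fpq_RInt p q s (hp : 0 < p) (hq : 0 < q) (hpq : / p + / q = 1) : 0 < s < 1 ->
  is_RInt (itg (/ p) s) 0 1 (fpq p q s).
Proof.
  intros Hs. rewrite (fpq_eq p q s hp hq hpq Hs).
  apply repr; auto.
  assert (0 < / p) by (apply Rinv_0_lt_compat; lra).
  assert (0 < / q) by (apply Rinv_0_lt_compat; lra). lra.
Qed.

Theorem lemmaC1 (p q : R) (hp : 0 < p) (hq : 0 < q) (hpq : / p + / q = 1) :
  convex_on_open 0 1 (fpq p q).
Proof.
  intros x y l Hx Hy Hl.
  assert (Ha : 0 < / p < 1).
  { assert (0 < / p) by (apply Rinv_0_lt_compat; lra).
    assert (0 < / q) by (apply Rinv_0_lt_compat; lra). lra. }
  assert (Hz : 0 < l * x + (1 - l) * y < 1).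
  { replace (l * x + (1 - l) * y) with (y + l * (x - y)) by ring.
    apply xt_in; lra. }
  assert (Ix := fpq_RInt p q x hp hq hpq Hx).
  assert (Iy := fpq_RInt p q y hp hq hpq Hy).
  assert (Iz := fpq_RInt p q _ hp hq hpq Hz).
  assert (Ic := is_RInt_plus _ _ _ _ _ _ (is_RInt_scal _ _ _ l _ Ix) (is_RInt_scal _ _ _ (1 - l) _ Iy)).
  rewrite <- (is_RInt_unique _ _ _ _ Iz).
  set (a := / p) in *.
  apply Rle_trans with (RInt (fun t => plus (scal l (itg a x t)) (scal (1 - l) (itg a y t))) 0 1);
    [ | right; apply is_RInt_unique; exact Ic].
  apply RInt_le.
  - lra.
  - eexists; eauto.
  - eexists; eauto.
  - intros t Ht. change (itg a (l * x + (1 - l) * y) t <= l * itg a x t + (1 - l) * itg a y t).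
    unfold itg.
    replace (a + t * (l * x + (1 - l) * y - a)) with (l * (a + t * (x - a)) + (1 - l) * (a + t * (y - a))) by ring.
    assert (H := kk_conv (a + t * (x - a)) (a + t * (y - a)) l
      (xt_in a x t Ha Hx ltac:(lra)) (xt_in a y t Ha Hy ltac:(lra)) Hl).
    assert (0 <= 1 - t) by lra.
    apply Rmult_le_compat_l with (r := 1 - t) in H; auto.
    lra.
Qed.
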